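(* For each $\eta\in(0,\eta_4)$ we have $\mathrm{Re}\,z_0,\ \mathrm{Re}\,w_1,\ \mathrm{Im}\,w_1\in(0,1)$.
   Context: For $\eta\in(0,\pi/3)$ let $a=\frac{e^{-i\eta}}{2\cos\eta}$, $c=\frac{1}{1-|a|^4}$, $z_0=ca$, $w_1=1-c|a|^2a$. Let $\Phi_4(\eta)=(1-|a|^4)\sin3\eta-|a|^3\sin2\eta+|a|^4\sin\eta$; it has a unique zero in $(\pi/4,\pi/3)$, denoted $\eta_4$. *)

(* Defs.v *)
From Stdlib Require Import Reals.
From Coquelicot Require Import Coquelicot.
Open Scope R_scope.

Definition expmi (eta : R) : C := (cos eta, - sin eta).

Definition a_of (eta : R) : C := Cmult (RtoC (/ (2 * cos eta))) (expmi eta).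

Definition absa (eta : R) : R := Cmod (a_of eta).

Definition c_of (eta : R) : R := / (1 - absa eta ^ 4).

Definition z0_of (eta : R) : C := Cmult (RtoC (c_of eta)) (a_of eta).

Definition w1_of (eta : R) : C :=
  Cminus (RtoC 1) (Cmult (RtoC (c_of eta * absa eta ^ 2)) (a_of eta)).

Definition Phi4 (eta : R) : R :=
  (1 - absa eta ^ 4) * sin (3 * eta) - absa eta ^ 3 * sin (2 * eta)
  + absa eta ^ 4 * sin eta.

(* Main.v *)
Require Import Defs.
From Stdlib Require Import Reals Lra Psatz.
From Coquelicot Require Import Coquelicot.
Open Scope R_scope.

Lemma absa_eq (eta : R) : 0 < cos eta -> absa eta = / (2 * cos eta).
Proof.
  intros Hc. unfold absa, a_of, expmi, Cmod. simpl.
  set (k := / (2 * cos eta)).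
  assert (Hk : 0 < k) by (unfold k; apply Rinv_0_lt_compat; lra).
  match goal with |- sqrt ?e = _ => replace e with (k ^ 2) by (pose proof (sin2_cos2 eta); unfold Rsqr in *; nra) end.
  rewrite sqrt_pow2; lra.
Qed.

Lemma sin3 (t : R) : sin (3 * t) = 2 * sin t * cos t ^ 2 + (cos t ^ 2 - sin t ^ 2) * sin t.
Proof.
  replace (3 * t) with (2 * t + t) by ring.
  rewrite sin_plus, sin_2a, cos_2a. ring.
Qed.

Lemma Phi4_eq (eta : R) : 0 < cos eta ->
  absa eta ^ 2 * Phi4 eta = sin eta * (1 - absa eta ^ 2) * (1 - 2 * absa eta ^ 4).
Proof.
  intros Hc. unfold Phi4. rewrite sin3, sin_2a, (absa_eq eta Hc).
  pose proof (sin2_cos2 eta) as H. unfold Rsqr in H.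
  replace ((cos eta ^ 2 - sin eta ^ 2) * sin eta) with ((2 * cos eta ^ 2 - 1) * sin eta)
    by (replace (sin eta ^ 2) with (1 - cos eta ^ 2) by (rewrite <- H; ring); ring).
  field. lra.
Qed.

Lemma frac01 (D Q : R) : 0 < D -> 0 < Q < D -> 0 < / D * Q < 1.
Proof.
  intros HD [HQ HQD]. split.
  - apply Rmult_lt_0_compat; [apply Rinv_0_lt_compat|]; lra.
  - apply (Rmult_lt_reg_l D); [lra|]. rewrite <- Rmult_assoc, Rinv_r; lra.
Qed.

Theorem lemma5p1 (eta4 : R)
  (Heta4_int : PI / 4 < eta4 < PI / 3)
  (Heta4_zero : Phi4 eta4 = 0)
  (Heta4_uniq : forall x : R, PI / 4 < x < PI / 3 -> Phi4 x = 0 -> x = eta4) :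
  forall eta : R, 0 < eta < eta4 ->
    (0 < Re (z0_of eta) < 1) /\
    (0 < Re (w1_of eta) < 1) /\
    (0 < Im (w1_of eta) < 1).
Proof.
  intros eta Heta.
  pose proof PI_RGT_0 as HPI.
  assert (HC4 : 1/2 < cos eta4).
  { rewrite <- cos_PI3. apply cos_decreasing_1; lra. }
  assert (HS4 : 0 < sin eta4) by (apply sin_gt_0; lra).
  pose proof (Phi4_eq eta4 ltac:(lra)) as HP.
  rewrite Heta4_zero, Rmult_0_r in HP.
  rewrite (absa_eq eta4 ltac:(lra)) in HP.
  set (k4 := / (2 * cos eta4)) in HP.
  assert (Hk4 : 0 < k4 < 1).
  { unfold k4. split. apply Rinv_0_lt_compat; lra.
    rewrite <- Rinv_1. apply Rinv_lt_contravar; lra. }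
  assert (Hk4e : 2 * k4 ^ 4 = 1).
  { assert (0 < 1 - k4 ^ 2) by nra.
    assert (Hz : sin eta4 * (1 - k4 ^ 2) <> 0) by (apply Rmult_integral_contrapositive; lra).
    destruct (Rmult_integral _ _ (eq_sym HP)) as [Hq|Hq]; [contradiction|lra]. }
  assert (HC : cos eta4 < cos eta) by (apply cos_decreasing_1; lra).
  assert (HC1 : cos eta < 1) by (rewrite <- cos_0; apply cos_decreasing_1; lra).
  assert (HS : 0 < sin eta) by (apply sin_gt_0; lra).
  pose proof (sin2_cos2 eta) as H2. unfold Rsqr in H2.
  set (x := cos eta) in *. set (S := sin eta) in *.
  set (k := / (2 * x)).
  assert (Hkx : 2 * x * k = 1) by (unfold k; field; lra).
  assert (Hk : 0 < k < k4).
  { unfold k, k4. split. apply Rinv_0_lt_compat; lra.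
    apply Rinv_lt_contravar; nra. }
  assert (Hk4' : k ^ 4 < 1/2).
  { assert (k ^ 2 < k4 ^ 2) by nra. nra. }
  assert (Habs : absa eta = k).
  { unfold k, x. apply absa_eq. fold x. lra. }
  unfold z0_of, w1_of, c_of. rewrite Habs. unfold a_of, expmi. change (cos eta) with x; change (sin eta) with S; change (/ (2 * x)) with k.
  unfold Re, Im, Cminus, Cplus, Copp, Cmult, RtoC; cbn [fst snd].
  assert (Hkx2 : k * x = 1/2) by (unfold k; field; lra).
  set (D := 1 - k ^ 4).
  assert (HD : 1/2 < D) by (unfold D; lra).
  split; [|split].
  - replace (/ D * (k * x - 0 * - S) - 0 * (k * - S + 0 * x)) with (/ D * (k * x)) by ring.
    apply frac01; nra.
  - replace (1 + - (/ D * k ^ 2 * (k * x - 0 * - S) - 0 * (k * - S + 0 * x)))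
      with (1 - / D * (k ^ 2 * (k * x))) by ring.
    rewrite Hkx2.
    assert (0 < / D * (k ^ 2 / 2) < 1) by (apply frac01; nra). lra.
  - replace (0 + - (/ D * k ^ 2 * (k * - S + 0 * x) + 0 * (k * x - 0 * - S)))
      with (/ D * (k ^ 3 * S)) by ring.
    assert (HQ : 0 < k ^ 3 * S) by (apply Rmult_lt_0_compat; [apply pow_lt|]; lra).
    apply frac01; [lra|]. split; [exact HQ|].
    assert (Hw : 0 < k ^ 4) by (apply pow_lt; lra).
    assert (H12 : (k ^ 6) ^ 2 < 1/8).
    { replace ((k ^ 6) ^ 2) with (k ^ 4 * k ^ 4 * k ^ 4) by ring.
      assert (k ^ 4 * k ^ 4 < 1/4) by nra. nra. }
    assert (H6p : 0 < k ^ 6) by (apply pow_lt; lra).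
    assert (Hv3 : k ^ 6 < 3/8) by nra.
    assert (HS2 : S ^ 2 = 1 - x ^ 2) by (replace (S^2) with (S*S) by ring; replace (x^2) with (x*x) by ring; lra).
    assert (Heq : (k ^ 3 * S) ^ 2 = k ^ 6 - k ^ 4 / 4).
    { replace ((k ^ 3 * S) ^ 2) with (k ^ 6 * S ^ 2) by ring. rewrite HS2.
      replace (k ^ 6 * (1 - x ^ 2)) with (k ^ 6 - k ^ 4 * (k * x) ^ 2) by ring.
      rewrite Hkx2. field. }
    assert (Hsq : (k ^ 3 * S) ^ 2 < D ^ 2).
    { rewrite Heq. unfold D.
      assert (0 < (1/2 - k ^ 4) * (5/4 - k ^ 4)) by (apply Rmult_lt_0_compat; lra).
      replace (k ^ 6) with ((k ^ 2) ^ 3) in * by ring.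
      replace (k ^ 4) with ((k ^ 2) ^ 2) in * by ring.
      nra. }
    nra.
Qed.
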